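(* There exist a finite graded poset $P$ with $\hat0$ and two CW-labelings $\lambda_1$ and $\lambda_2$ of $P$ such that the posets $Q_{\lambda_1}(P)$ and $Q_{\lambda_2}(P)$ are not isomorphic.
   Context: C-labelings: a maximal chain is an unrefinable chain from $\hat0$ to a maximal element. A C-labeling assigns to each pair $(\mathbf m,e)$, $\mathbf m$ a maximal chain and $e$ a cover relation of $\mathbf m$, a label in a poset $\Lambda$, such that maximal chains coinciding along their bottom $d$ cover relations have equal labels there. A rooted interval $[x,y]_{\mathbf r}$ is an interval with a saturated chain $\mathbf r$ from $\hat0$ to $x$, maximal chains $\mathbf c$ of $[x,y]$ labeled as in $\mathbf r\cup\mathbf c$. Increasing = strictly increasing label word; ascent-free = no consecutive labels $a<b$. CR-labeling: each rooted interval has exactly one increasing maximal chain. Rank two switching property: for every maximal chain $\mathbf m:\hat0=m_0\lessdot\cdots\lessdot m_k$ and $i<k$ with an ascent at rank $i$ there is a unique $m_i'\neq m_i$ such that replacing $m_i$ by $m_i'$ gives a maximal chain with the same labels except that those at ranks $i,i+1$ are swapped, and $m_i'$ is the same for all maximal chains agreeing with $\mathbf m$ in $m_0,\dots,m_{i+1}$ (quadratic exchange). CW-labeling: CR-labeling with the rank two switching property such that in each rooted interval distinct ascent-free maximal chains have distinct label words. $Q_\lambda(P)$: $C(P)$ is the set of saturated chains from $\hat0$ ordered by inclusion; $\mathbf c_1\sim_\lambda\mathbf c_2$ iff they end at the same $y$ and are connected by quadratic exchanges (forwards or backwards) among maximal chains of $[\hat0,y]$; $Q_\lambda(P)$ is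 the set of classes ordered by the transitive closure of: $X\le Y$ if some $\mathbf c\in X$, $\mathbf d\in Y$ have $\mathbf c\subseteq\mathbf d$. *)

(* Defs.v *)
From HB Require Import structures.
From mathcomp Require Import all_boot all_order.
From Stdlib Require Import Relations.
Set Implicit Arguments. Unset Strict Implicit. Unset Printing Implicit Defensive.
Import Order.TTheory.
Local Open Scope order_scope.

(* A finite poset with 0^ is a finBPOrderType; 0^ is \bot.
   A saturated chain from x is a seq [:: c_1; ...; c_k] with
   x <. c_1 <. ... <. c_k (covers); it denotes the chain {x, c_1, ..., c_k}.
   A chain starting at 0^ is represented by the seq of its elements above 0^.
   For a maximal chain m = [:: m_1; ...; m_k] (m_0 = 0^), the label
   lam m i (0 <= i < k) is the label of the cover relation m_i <. m_(i+1),
   i.e. of the cover relation into the element nth \bot m i. *)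

Section Chains.
Variables (d : Order.disp_t) (P : finBPOrderType d).

Definition covers (x y : P) : bool :=
  (x < y) && [forall z : P, ~~ ((x < z) && (z < y))].

Definition satchain (x : P) (s : seq P) : bool := path covers x s.

Definition is_maximal (x : P) : bool := [forall y : P, ~~ (x < y)].

Definition maxchain (m : seq P) : bool :=
  satchain \bot m && is_maximal (last \bot m).

Definition graded : Prop :=
  forall m m', maxchain m -> maxchain m' -> size m = size m'.

Variables (dL : Order.disp_t) (L : porderType dL).

Definition labeling := seq P -> nat -> L.

Definition labs (lam : labeling) (m : seq P) : seq L :=
  [seq lam m i | i <- iota 0 (size m)].

Definition C_labeling (lam : labeling) : Prop :=
  forall m m' k, maxchain m -> maxchain m' -> take k m = take k m' ->
  forall i, i < k -> i < size m -> lam m i = lam m' i.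

Definition interval_chain (r : seq P) (y : P) (c : seq P) : Prop :=
  satchain \bot r /\ satchain (last \bot r) c /\ last (last \bot r) c = y.

(* w is the label word of c in the rooted interval rooted at r:
   the labels of c as in r ++ c (computed in a maximal chain extending
   r ++ c) *)
Definition rooted_word (lam : labeling) (r c : seq P) (w : seq L) : Prop :=
  exists m, maxchain m /\ prefix (r ++ c) m /\
            w = take (size c) (drop (size r) (labs lam m)).

Definition increasing (w : seq L) : bool := sorted (fun a b => a < b) w.
Definition ascent_free (w : seq L) : bool := sorted (fun a b => ~~ (a < b)) w.

Definition rooted_increasing (lam : labeling) (r c : seq P) : Prop :=
  exists w, rooted_word lam r c w /\ increasing w.

Definition CR_labeling (lam : labeling) : Prop :=
  C_labeling lam /\
  forall r y, satchain \bot r -> last \bot r <= y ->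
    exists c, (interval_chain r y c /\ rooted_increasing lam r c) /\
      forall c', interval_chain r y c' -> rooted_increasing lam r c' -> c' = c.

(* replacing the element nth \bot m p (= m_(p+1)) by y gives a maximal
   chain whose labels are those of m with the labels at positions p, p+1
   swapped *)
Definition swap_ok (lam : labeling) (m : seq P) (p : nat) (y : P) : Prop :=
  let m' := set_nth \bot m p y in
  y != nth \bot m p /\ maxchain m' /\
  lam m' p = lam m p.+1 /\ lam m' p.+1 = lam m p /\
  forall j, j < size m -> j != p -> j != p.+1 -> lam m' j = lam m j.

Definition rank_two_switching (lam : labeling) : Prop :=
  forall m p, maxchain m -> p.+1 < size m -> lam m p < lam m p.+1 ->
    exists y, swap_ok lam m p y /\
      (forall y', swap_ok lam m p y' -> y' = y) /\
      (forall n, maxchain n -> take p.+2 n = take p.+2 m -> swap_ok lam n p y).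

Definition CW_labeling (lam : labeling) : Prop :=
  CR_labeling lam /\ rank_two_switching lam /\
  forall r y c1 c2 w1 w2,
    interval_chain r y c1 -> interval_chain r y c2 ->
    rooted_word lam r c1 w1 -> rooted_word lam r c2 w2 ->
    ascent_free w1 -> ascent_free w2 -> c1 <> c2 -> w1 <> w2.

Definition inC (c : seq P) : Prop := satchain \bot c.

Definition qexchange (lam : labeling) (c c' : seq P) : Prop :=
  exists m p y, maxchain m /\ prefix c m /\ p.+1 < size c /\
    lam m p < lam m p.+1 /\ swap_ok lam m p y /\ c' = set_nth \bot c p y.

Definition qsim (lam : labeling) (c1 c2 : seq P) : Prop :=
  inC c1 /\ inC c2 /\ last \bot c1 = last \bot c2 /\
  clos_refl_sym_trans (seq P) (qexchange lam) c1 c2.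

Definition Qle0 (lam : labeling) (c d : seq P) : Prop :=
  exists c' d', qsim lam c c' /\ qsim lam d d' /\
    {subset (\bot :: c') <= (\bot :: d')}.

Definition Qle (lam : labeling) : relation (seq P) :=
  clos_trans (seq P) (Qle0 lam).

End Chains.

(* Q_{lam1}(P) and Q_{lam2}(P) are isomorphic: there is a map on chains
   inducing an order-isomorphism between the sets of classes. *)
Definition Q_isomorphic (d : Order.disp_t) (P : finBPOrderType d)
  (d1 : Order.disp_t) (L1 : porderType d1) (d2 : Order.disp_t) (L2 : porderType d2)
  (lam1 : labeling P L1) (lam2 : labeling P L2) : Prop :=
  exists f : seq P -> seq P,
    (forall c, inC c -> inC (f c)) /\
    (forall c c', inC c -> inC c' -> (qsim lam1 c c' <-> qsim lam2 (f c) (f c'))) /\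
    (forall e, inC e -> exists c, inC c /\ qsim lam2 (f c) e) /\
    (forall c c', inC c -> inC c' -> (Qle lam1 c c' <-> Qle lam2 (f c) (f c'))).

(* Main.v *)
From Stdlib Require Import Relations.
Require Import Defs.
From HB Require Import structures.
From mathcomp Require Import all_boot all_order.
Set Implicit Arguments. Unset Strict Implicit. Unset Printing Implicit Defensive.
Import Order.TTheory.
Local Open Scope order_scope.

Inductive E := EO | EA | EB | EC | EY | EZ.
Definition E2n (e : E) : nat := match e with EO => 0 | EA => 1 | EB => 2 | EC => 3 | EY => 4 | EZ => 5 end.
Definition n2E (n : nat) : option E := match n with 0 => Some EO | 1 => Some EA | 2 => Some EB | 3 => Some EC | 4 => Some EY | 5 => Some EZ | _ => None end.
Lemma E2nK : pcancel E2n n2E. Proof. move=> x; case: x; reflexivity. Qed.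
HB.instance Definition _ := Countable.copy E (pcan_type E2nK).
Definition Eenum := [:: EO; EA; EB; EC; EY; EZ].
Lemma Eenum_uniq : uniq Eenum. Proof. by []. Qed.
Lemma Eenum_all : forall x : E, x \in Eenum. Proof. by case. Qed.
HB.instance Definition _ := isFinite.Build E (Finite.uniq_enumP Eenum_uniq Eenum_all).
Definition Ele (x y : E) : bool :=
  match x, y with
  | EO, _ => true
  | EA, (EA | EY | EZ) => true
  | EB, (EB | EY | EZ) => true
  | EC, (EC | EY) => true
  | EY, EY => true
  | EZ, EZ => true
  | _, _ => false end.
Lemma Ele_refl : reflexive Ele. Proof. move=> x; case: x; reflexivity. Qed.
Lemma Ele_anti : antisymmetric Ele. Proof. by case; case => // /andP[]. Qed.
Lemma Ele_trans : transitive Ele. Proof. by case; case; case. Qed.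
Fact Edisp : Order.disp_t. Proof. exact: Order.Disp tt tt. Qed.
HB.instance Definition _ := Order.Le_isPOrder.Build Edisp E Ele_refl Ele_anti Ele_trans.
HB.instance Definition _ := Order.hasBottom.Build Edisp E (fun x => erefl true : Ele EO x).
Definition P : finBPOrderType Edisp := E.


Lemma forallE (p : pred P) : [forall z : P, p z] = all p Eenum.
Proof. by apply/forallP/allP => H z //; apply: H; exact: Eenum_all. Qed.

Definition covb (x y : P) := (x < y) && all (fun z => ~~ ((x < z) && (z < y))) Eenum.
Lemma coversE (x y : P) : covers x y = covb x y.
Proof. by rewrite /covers forallE. Qed.
Lemma satE (x : P) s : satchain x s = path covb x s.
Proof. by rewrite /satchain; apply: eq_path => a b; rewrite coversE. Qed.
Definition maxb (x : P) := all (fun y => ~~ (x < y)) Eenum.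
Lemma maxE (x : P) : is_maximal x = maxb x.
Proof. by rewrite /is_maximal forallE. Qed.
Definition maxcb (m : seq P) := path covb \bot m && maxb (last \bot m).
Lemma maxchainE (m : seq P) : maxchain m = maxcb m.
Proof. by rewrite /maxchain satE maxE. Qed.

Definition seqs2 : seq (seq P) := [::] :: [seq [:: x] | x <- Eenum] ++ [seq [:: x; y] | x <- Eenum, y <- Eenum].
Lemma no3 : all (fun x => all (fun a => all (fun b => all (fun c => ~~ path covb x [:: a; b; c]) Eenum) Eenum) Eenum) Eenum.
Proof. by vm_compute. Qed.
Lemma sat_seqs2 (x : P) s : satchain x s -> s \in seqs2.
Proof.
rewrite satE; case: s => [|a [|b [|c s']]] //.
- by move=> _; rewrite /seqs2 inE mem_cat map_f ?orbT ?Eenum_all.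
- by move=> _; rewrite /seqs2 inE mem_cat (allpairs_f (fun x y => [:: x; y])) ?orbT ?Eenum_all.
- move=> H; exfalso.
  have H3 : path covb x [:: a; b; c].
    by move: H; rewrite -[a :: b :: c :: s']/([:: a; b; c] ++ s') cat_path => /andP[].
  move/allP: no3 => /(_ x (Eenum_all x)) /allP /(_ a (Eenum_all a)) /allP /(_ b (Eenum_all b)) /allP /(_ c (Eenum_all c)).
  by rewrite H3.
Qed.
Definition maxs := [seq m <- seqs2 | maxcb m].
Lemma maxsP (m : seq P) : maxchain m <-> m \in maxs.
Proof.
split => [H|]; last by rewrite mem_filter maxchainE => /andP[].
rewrite mem_filter -maxchainE H /=; apply: (@sat_seqs2 \bot).
by move: H; rewrite /maxchain => /andP[].
Qed.
Lemma maxs_size : all (fun m => size m == 2) maxs. Proof. by vm_compute. Qed.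
Lemma maxchain_size (m : seq P) : maxchain m -> size m = 2.
Proof. by move/maxsP => H; move/allP: maxs_size => /(_ m H) /eqP. Qed.

Lemma graded_P : graded P.
Proof. by move=> m m' /maxchain_size -> /maxchain_size ->. Qed.

Section Lab.
Variable tab : seq P -> nat.
Definition lamOf : labeling P nat := fun m i => tab (take i.+1 m).
Local Notation lam := lamOf.

Lemma C_lamOf : C_labeling lam.
Proof.
move=> m m' k _ _ Ht i ik _; rewrite /lam.
by rewrite -(take_takel m ik) Ht take_takel.
Qed.

Definition wordb (r c m : seq P) := take (size c) (drop (size r) (labs lam m)).
Definition rinc_b r c := has (fun m => prefix (r ++ c) m && increasing (wordb r c m)) maxs.
Lemma rincP r c : rooted_increasing lam r c <-> rinc_b r c.
Proof.
split.
- case=> w [[m [Hm [Hp ->]]] Hi]; apply/hasP; exists m; first by apply/maxsP.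
  by rewrite Hp.
- case/hasP => m /maxsP Hm /andP[Hp Hi]; exists (wordb r c m); split => //.
  by exists m.
Qed.
Definition cands r y := [seq c <- seqs2 | path covb (last \bot r) c && (last (last \bot r) c == y) && rinc_b r c].
Definition CRb := all (fun r => path covb \bot r ==> all (fun y => (last \bot r <= y) ==> (size (cands r y) == 1)) Eenum) seqs2.

Lemma CR_lamOf : CRb -> CR_labeling lam.
Proof.
move=> H; split; first exact: C_lamOf.
move=> r y Hr Hy.
have Hr2 := sat_seqs2 Hr.
move/allP: H => /(_ r Hr2); rewrite -satE Hr implyTb => /allP /(_ y (Eenum_all y)).
rewrite Hy implyTb.
case E1: (cands r y) => [|c [|? ?]] // _.
have : c \in cands r y by rewrite E1 inE eqxx.
rewrite mem_filter => /andP[/andP[/andP[Hc /eqP Hl] Hi] _].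
exists c; split.
  split; first by split => //; rewrite satE.
  by apply/rincP.
move=> c' [_ [Hc' Hl']] /rincP Hi'.
have : c' \in cands r y.
  by rewrite mem_filter -satE Hc' Hl' eqxx Hi' (sat_seqs2 Hc').
by rewrite E1 inE => /eqP.
Qed.

Definition swapb (m : seq P) (y : P) :=
  let m' := set_nth \bot m 0 y in
  [&& y != nth \bot m 0, maxcb m', lam m' 0 == lam m 1 & lam m' 1 == lam m 0].
Definition R2b := all (fun m => (lam m 0 < lam m 1)%O ==> (size [seq y <- Eenum | swapb m y] == 1)) maxs.

Lemma swapP m y : size m = 2 -> swap_ok lam m 0 y <-> swapb m y.
Proof.
move=> Hs; split.
- case=> H1 [H2 [H3 [H4 _]]]; rewrite /swapb H1 -maxchainE H2 H3 H4 !eqxx //.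
- case/and4P => H1 H2 /eqP H3 /eqP H4; split => //; split; first by rewrite maxchainE.
  split => //; split => // j; rewrite Hs; by case: j => [|[|j]].
Qed.

Lemma R2_lamOf : R2b -> rank_two_switching lam.
Proof.
move=> H m p Hm; rewrite (maxchain_size Hm); case: p => [|p] // _ Ha.
move/allP: H => /(_ m (proj1 (maxsP m) Hm)); rewrite Ha implyTb.
case E1: [seq y <- Eenum | swapb m y] => [|y [|? ?]] // _.
have : y \in [seq y <- Eenum | swapb m y] by rewrite E1 inE eqxx.
rewrite mem_filter => /andP[Hy _].
have Hs := maxchain_size Hm.
exists y; split; first by apply/swapP.
split.
  move=> y' /(swapP _ Hs) Hy'.
  have : y' \in [seq y <- Eenum | swapb m y] by rewrite mem_filter Hy' Eenum_all.
  by rewrite E1 inE => /eqP.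
move=> n Hn; rewrite !take_oversize ?(maxchain_size Hn) ?Hs // => ->.
by apply/swapP.
Qed.

Definition CWb := all (fun r => path covb \bot r ==>
  (let cs := [seq c <- seqs2 | path covb (last \bot r) c] in
   all (fun c1 => all (fun c2 => (last (last \bot r) c1 == last (last \bot r) c2) ==> (c1 != c2) ==>
     all (fun m1 => all (fun m2 =>
        [&& prefix (r ++ c1) m1, prefix (r ++ c2) m2, ascent_free (wordb r c1 m1) & ascent_free (wordb r c2 m2)]
        ==> (wordb r c1 m1 != wordb r c2 m2)) maxs) maxs) cs) cs)) seqs2.

Lemma CW_lamOf : CRb -> R2b -> CWb -> CW_labeling lam.
Proof.
move=> H1 H2 H3; split; first exact: CR_lamOf.
split; first exact: R2_lamOf.
move=> r y c1 c2 w1 w2 [Hr [Hc1 Hl1]] [_ [Hc2 Hl2]] [m1 [Hm1 [Hp1 ->]]] [m2 [Hm2 [Hp2 ->]]] Ha1 Ha2 Hne.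
have Hc1' : c1 \in [seq c <- seqs2 | path covb (last \bot r) c] by rewrite mem_filter -satE Hc1 (sat_seqs2 Hc1).
have Hc2' : c2 \in [seq c <- seqs2 | path covb (last \bot r) c] by rewrite mem_filter -satE Hc2 (sat_seqs2 Hc2).
have Hne' : (c1 != c2) by apply/eqP.
have Hl : last (last \bot r) c1 == last (last \bot r) c2 by rewrite Hl1 Hl2.
move: H3 => /allP /(_ r (sat_seqs2 Hr)).
rewrite -satE Hr implyTb => /allP /(_ c1 Hc1') /allP /(_ c2 Hc2').
rewrite Hl Hne' !implyTb => /allP /(_ m1 (proj1 (maxsP _) Hm1)) /allP /(_ m2 (proj1 (maxsP _) Hm2)).
rewrite Hp1 Hp2 Ha1 Ha2 implyTb.
by move/eqP.
Qed.
End Lab.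

Definition atomlab (x : P) : nat := match x with EA => 1 | EB => 2 | EC => 3 | _ => 0 end.
Definition tab1 (s : seq P) : nat :=
  match s with
  | [:: x] => atomlab x
  | [:: x; w] => match x, w with EA, EZ => 2 | EB, EZ => 1 | EA, EY => 2 | EB, EY => 1 | _, _ => 0 end
  | _ => 0 end.
Definition tab2 (s : seq P) : nat :=
  match s with
  | [:: x] => atomlab x
  | [:: x; w] => match x, w with EA, EZ => 2 | EB, EZ => 1 | EA, EY => 0 | EB, EY => 3 | EC, EY => 2 | _, _ => 0 end
  | _ => 0 end.

Lemma CR1 : CRb tab1. Proof. by vm_compute. Qed.
Lemma R21 : R2b tab1. Proof. by vm_compute. Qed.
Lemma CW1 : CWb tab1. Proof. by vm_compute. Qed.
Lemma CR2 : CRb tab2. Proof. by vm_compute. Qed.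
Lemma R22 : R2b tab2. Proof. by vm_compute. Qed.
Lemma CW2 : CWb tab2. Proof. by vm_compute. Qed.

Definition lam1 := lamOf tab1.
Definition lam2 := lamOf tab2.

Lemma qex_of tab (m : seq P) y : m \in maxs -> (lamOf tab m 0 < lamOf tab m 1)%O -> swapb tab m y ->
  qexchange (lamOf tab) m (set_nth \bot m 0 y).
Proof.
move=> Hm Ha Hs; have Hm' := proj2 (maxsP m) Hm; have Hsz := maxchain_size Hm'.
exists m, 0, y; split => //; split; first exact: prefix_refl.
split; first by rewrite Hsz.
split => //; split => //; exact/swapP.
Qed.

Lemma inC_of (c : seq P) : path covb \bot c -> inC c.
Proof. by rewrite /inC satE. Qed.

Definition allC := [seq c <- seqs2 | path covb \bot c].
Lemma inC_allC (c : seq P) : inC c -> c \in allC.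
Proof. move=> H; rewrite mem_filter -satE H (sat_seqs2 H). done. Qed.

Definition cB : seq P := [::].
Definition cA : seq P := [:: EA].
Definition cA' : seq P := [:: EB].
Definition cX : seq P := [:: EA; EZ].
Definition cX' : seq P := [:: EA; EY].

Lemma qsim_refl tab (c : seq P) : inC c -> qsim (lamOf tab) c c.
Proof. by move=> H; split => //; split => //; split => //; apply: rst_refl. Qed.

Lemma qsim1_X : qsim lam1 [:: EA; EZ] [:: EB; EZ].
Proof.
split; first by apply: inC_of; vm_compute.
split; first by apply: inC_of; vm_compute.
split => //; apply: rst_step.
have -> : [:: EB; EZ] = set_nth \bot [:: EA; EZ] 0 EB by [].
by apply: qex_of; vm_compute.
Qed.
Lemma qsim1_X' : qsim lam1 [:: EA; EY] [:: EB; EY].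
Proof.
split; first by apply: inC_of; vm_compute.
split; first by apply: inC_of; vm_compute.
split => //; apply: rst_step.
have -> : [:: EB; EY] = set_nth \bot [:: EA; EY] 0 EB by [].
by apply: qex_of; vm_compute.
Qed.

Lemma Qle_direct tab (c d : seq P) : inC c -> inC d -> all (mem (\bot :: d)) (\bot :: c) -> Qle (lamOf tab) c d.
Proof.
move=> Hc Hd Hs; apply: t_step; exists c, d; split; first exact: qsim_refl.
split; first exact: qsim_refl.
exact/allP.
Qed.

Lemma last_qsim tab (c d : seq P) : qsim (lamOf tab) c d -> last \bot c = last \bot d.
Proof. by case=> _ [_ [->]]. Qed.

Definition h2 (c : seq P) : seq P :=
  match c with
  | [::] => [:: EO]
  | [:: x] => [:: EO; x]
  | [:: EA; EZ] | [:: EB; EZ] => [:: EO; EA; EB; EZ]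
  | [:: EA; EY] => [:: EO; EA; EY]
  | [:: EB; EY] | [:: EC; EY] => [:: EO; EB; EC; EY]
  | _ => [::] end.

Definition QX2b := all (fun m => all (fun y => ((lam2 m 0 < lam2 m 1)%O && swapb tab2 m y) ==> (h2 (set_nth \bot m 0 y) == h2 m)) Eenum) maxs.
Lemma QX2 : QX2b. Proof. by vm_compute. Qed.

Lemma qex_h2 (c c' : seq P) : qexchange lam2 c c' -> h2 c = h2 c'.
Proof.
case=> m [p [y [Hm [Hpre [Hp [Ha [Hs ->]]]]]]].
have Hsz := maxchain_size Hm.
have Hc : (size c <= 2)%N by rewrite -Hsz; apply: size_prefix.
have Hc2 : size c = 2 by apply/eqP; rewrite eqn_leq Hc; apply: leq_ltn_trans Hp.
have Ep : p = 0 by move: Hp; rewrite Hc2; case: (p) => [|[|]].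
subst p.
have Ecm : c = m.
  move: Hpre; rewrite prefixE Hc2 take_oversize ?Hsz // => /eqP <-; done.
subst c.
have Hb : swapb tab2 m y by apply/swapP.
move/allP: QX2 => /(_ m (proj1 (maxsP m) Hm)) /allP /(_ y (Eenum_all y)).
by rewrite Ha Hb implyTb => /eqP ->.
Qed.

Lemma qsim_h2 (c d : seq P) : qsim lam2 c d -> h2 c = h2 d.
Proof.
case=> _ [_ [_ H]].
induction H as [x y H|x|x y _ IH|x y z _ IH1 _ IH2].
- exact: qex_h2.
- done.
- by rewrite IH.
- by rewrite IH1 IH2.
Qed.

Definition SUB2b := all (fun c => path covb \bot c ==> all (fun d => path covb \bot d ==>
   all (mem (\bot :: d)) (\bot :: c) ==> all (mem (h2 d)) (h2 c)) seqs2) seqs2.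
Lemma SUB2 : SUB2b. Proof. by vm_compute. Qed.

Lemma Qle0_h2 (c d : seq P) : Qle0 lam2 c d -> {subset h2 c <= h2 d}.
Proof.
case=> c' [d' [Hcc [Hdd Hsub]]].
rewrite (qsim_h2 Hcc) (qsim_h2 Hdd).
case: Hcc => _ [Hc' _]; case: Hdd => _ [Hd' _].
move/allP: SUB2 => /(_ c' (sat_seqs2 Hc')); rewrite -satE Hc' implyTb.
move=> /allP /(_ d' (sat_seqs2 Hd')); rewrite -satE Hd' implyTb.
have -> : all (mem (\bot :: d')) (\bot :: c') by apply/allP.
by rewrite implyTb => /allP.
Qed.

Lemma Qle_h2 (c d : seq P) : Qle lam2 c d -> {subset h2 c <= h2 d}.
Proof.
elim=> [x y H|x y z _ IH1 _ IH2]; first exact: Qle0_h2.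
by move=> u /IH1 /IH2.
Qed.

Definition same2 (c d : seq P) :=
  [|| c == d,
      (c == [:: EA; EZ]) && (d == [:: EB; EZ]),
      (c == [:: EB; EZ]) && (d == [:: EA; EZ]),
      (c == [:: EB; EY]) && (d == [:: EC; EY]) |
      (c == [:: EC; EY]) && (d == [:: EB; EY])].

Lemma qsim2_step (m : seq P) y : m \in maxs -> (lam2 m 0 < lam2 m 1)%O -> swapb tab2 m y ->
  inC (set_nth \bot m 0 y) -> last \bot m = last \bot (set_nth \bot m 0 y) ->
  qsim lam2 m (set_nth \bot m 0 y) /\ qsim lam2 (set_nth \bot m 0 y) m.
Proof.
move=> Hm Ha Hs Hi Hl.
have Hm' : inC m by move/maxsP: Hm; rewrite /maxchain => /andP[].
have Q : qexchange lam2 m (set_nth \bot m 0 y) by apply: qex_of.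
split; split => //; split => //; split => //.
- exact: rst_step.
- by apply: rst_sym; apply: rst_step.
Qed.

Lemma same2_qsim (c d : seq P) : inC c -> inC d -> same2 c d -> qsim lam2 c d.
Proof.
move=> Hc Hd; move/orP=> [|/orP[|/orP[|/orP[|]]]].
- by move/eqP => <-; apply: qsim_refl.
- case/andP => /eqP -> /eqP ->.
  have -> : [:: EB; EZ] = set_nth \bot [:: EA; EZ] 0 EB by [].
  by apply: (proj1 (qsim2_step _ _ _ _ _)); try apply: inC_of; vm_compute.
- case/andP => /eqP -> /eqP ->.
  have -> : [:: EB; EZ] = set_nth \bot [:: EA; EZ] 0 EB by [].
  by apply: (proj2 (qsim2_step _ _ _ _ _)); try apply: inC_of; vm_compute.
- case/andP => /eqP -> /eqP ->.
  have -> : [:: EC; EY] = set_nth \bot [:: EB; EY] 0 EC by [].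
  by apply: (proj1 (qsim2_step _ _ _ _ _)); try apply: inC_of; vm_compute.
- case/andP => /eqP -> /eqP ->.
  have -> : [:: EC; EY] = set_nth \bot [:: EB; EY] 0 EC by [].
  by apply: (proj2 (qsim2_step _ _ _ _ _)); try apply: inC_of; vm_compute.
Qed.

Definition incl2 (c d : seq P) := all (mem (h2 d)) (h2 c).

Definition FINb := all (fun B => all (fun A => all (fun A' => all (fun X => all (fun X' =>
  ~~ [&& incl2 B A, incl2 B A', incl2 A X, incl2 A X', incl2 A' X, incl2 A' X',
        ~~ same2 B A, ~~ same2 B A', ~~ same2 B X, ~~ same2 B X', ~~ same2 A A',
        ~~ same2 A X, ~~ same2 A X', ~~ same2 A' X, ~~ same2 A' X' & ~~ same2 X X'])
  allC) allC) allC) allC) allC.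
Lemma FIN : FINb. Proof. by vm_compute. Qed.

Lemma not_iso : ~ Q_isomorphic lam1 lam2.
Proof.
case=> f [Hf [Hq [_ Hl]]].
have iB : inC cB by apply: inC_of; vm_compute.
have iA : inC cA by apply: inC_of; vm_compute.
have iA' : inC cA' by apply: inC_of; vm_compute.
have iX : inC cX by apply: inC_of; vm_compute.
have iX' : inC cX' by apply: inC_of; vm_compute.
have Le : forall c d, inC c -> inC d -> Qle lam1 c d -> incl2 (f c) (f d).
  move=> c d Hc Hd H; apply/allP; apply: Qle_h2; exact: (proj1 (Hl c d Hc Hd) H).
have Ne : forall c d, inC c -> inC d -> last \bot c != last \bot d -> ~~ same2 (f c) (f d).
  move=> c d Hc Hd Hne; apply/negP => /(same2_qsim (Hf _ Hc) (Hf _ Hd)) /(proj2 (Hq c d Hc Hd)).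
  by move/last_qsim; apply/eqP.
have l1 : Qle lam1 cB cA by apply: Qle_direct => //; vm_compute.
have l2 : Qle lam1 cB cA' by apply: Qle_direct => //; vm_compute.
have l3 : Qle lam1 cA cX by apply: Qle_direct => //; vm_compute.
have l4 : Qle lam1 cA cX' by apply: Qle_direct => //; vm_compute.
have l5 : Qle lam1 cA' cX.
  apply: t_step; exists cA', [:: EB; EZ]; split; first exact: qsim_refl.
  split; first exact: qsim1_X.
  by apply/allP; vm_compute.
have l6 : Qle lam1 cA' cX'.
  apply: t_step; exists cA', [:: EB; EY]; split; first exact: qsim_refl.
  split; first exact: qsim1_X'.
  by apply/allP; vm_compute.
move/allP: FIN => /(_ _ (inC_allC (Hf _ iB))) /allP /(_ _ (inC_allC (Hf _ iA))) /allP /(_ _ (inC_allC (Hf _ iA'))).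
move=> /allP /(_ _ (inC_allC (Hf _ iX))) /allP /(_ _ (inC_allC (Hf _ iX'))).
rewrite (Le _ _ iB iA l1) (Le _ _ iB iA' l2) (Le _ _ iA iX l3) (Le _ _ iA iX' l4) (Le _ _ iA' iX l5) (Le _ _ iA' iX' l6).
by rewrite !Ne.
Qed.

Theorem theorem5p22 :
  exists (d : Order.disp_t) (P : finBPOrderType d),
    graded P /\
    exists (d1 : Order.disp_t) (L1 : porderType d1) (lam1 : labeling P L1)
           (d2 : Order.disp_t) (L2 : porderType d2) (lam2 : labeling P L2),
      CW_labeling lam1 /\ CW_labeling lam2 /\ ~ Q_isomorphic lam1 lam2.
Proof.
exists Edisp, P; split; first exact: graded_P.
exists _, nat, lam1, _, nat, lam2.
split; first exact: (CW_lamOf CR1 R21 CW1).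
split; first exact: (CW_lamOf CR2 R22 CW2).
exact: not_iso.
Qed.
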